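(* Let $C \subseteq \mathbb{F}_q^n$ be an arbitrary subspace over the finite field $\mathbb{F}_q$. Then $C$ is $\left(1+\frac{1}{q}\right)$-non-overlapping.
   Context: For a subspace $C \ne \{0\}$, $d(C) := \min_{u \in C\setminus\{0\}}\|u\|_0$, where $\|u\|_0$ is the number of nonzero coordinates. A subspace $C$ is $\alpha$-non-overlapping ($\alpha \ge 1$) if for any $u, v \in C$ linearly independent over $\mathbb{F}_q$, $|\mathrm{supp}(u)\cup\mathrm{supp}(v)| \ge \alpha\cdot d(C)$, where $\mathrm{supp}(u)$ is the set of nonzero coordinates of $u$. *)

(* Defs.v *)
From HB Require Import structures.
From mathcomp Require Import all_boot all_order all_algebra all_field.
Set Implicit Arguments. Unset Strict Implicit. Unset Printing Implicit Defensive.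
Import GRing.Theory Num.Theory.
Local Open Scope ring_scope.

Definition supp (F : fieldType) (n : nat) (u : 'rV[F]_n) : {set 'I_n} :=
  [set i | u 0 i != 0].

Definition wt (F : fieldType) (n : nat) (u : 'rV[F]_n) : nat := #|supp u|.

(* minimum distance d(C) = min over nonzero u in C of wt u.
   (The default value n is never below the true minimum, so for C <> {0}
   this is exactly the minimum; for C = {0} it is irrelevant.) *)
Definition dmin (F : finFieldType) (n : nat) (C : {vspace 'rV[F]_n}) : nat :=
  \big[minn/n]_(u : 'rV[F]_n | (u \in C) && (u != 0)) wt u.

Definition non_overlapping (F : finFieldType) (n : nat)
    (alpha : rat) (C : {vspace 'rV[F]_n}) : Prop :=
  1 <= alpha /\
  forall u v : 'rV[F]_n, u \in C -> v \in C -> free [:: u; v] ->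
    alpha * (dmin C)%:R <= (#|supp u :|: supp v|)%:R.

(* Main.v *)
Require Import Defs.
From HB Require Import structures.
From mathcomp Require Import all_boot all_order all_algebra all_field.
From mathcomp Require Import zify.
Import GRing.Theory Num.Theory.
Local Open Scope ring_scope.

Lemma bigminn_le (I : eqType) (r : seq I) (P : pred I) (F : I -> nat) x0 j :
  j \in r -> P j -> (\big[minn/x0]_(i <- r | P i) F i <= F j)%N.
Proof.
elim: r => [//|a r IH]; rewrite inE big_cons => /orP [/eqP <- -> | jr Pj].
  by rewrite geq_minl.
case: (P a); last exact: IH.
by rewrite (leq_trans (geq_minr _ _)) // IH.
Qed.

Lemma dmin_le (F : finFieldType) (n : nat) (C : {vspace 'rV[F]_n}) w :
  w \in C -> w != 0 -> (dmin C <= wt w)%N.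
Proof.
move=> wC w0; rewrite /dmin; apply: bigminn_le; first exact: mem_index_enum.
by rewrite wC w0.
Qed.

Lemma wt_sum (F : finFieldType) (n : nat) (w : 'rV[F]_n) :
  wt w = (\sum_i ((w 0 i != 0)%R : nat))%N.
Proof.
rewrite /wt /supp -sum1_card big_mkcond /=; apply: eq_bigr => i _.
by rewrite inE; case: (w 0 i != 0).
Qed.

Lemma count_zero1 (F : finFieldType) (x y : F) : x != 0 ->
  (\sum_(p : F * F) ((p.1 * x + p.2 * y == 0)%R : nat))%N = #|F|.
Proof.
move=> x0.
rewrite -(pair_big xpredT xpredT (fun a b => ((a * x + b * y == 0)%R : nat))) /=.
rewrite exchange_big /= -sum1_card; apply: eq_bigr => b _.
rewrite (bigD1 (- (b * y) / x)) //= big1 ?addn0.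
  by rewrite divfK // addNr eqxx.
move=> a ne; apply/eqP; rewrite eqb0; apply: contra ne => h.
by rewrite addr_eq0 in h; move/eqP: h => <-; rewrite mulfK.
Qed.

Lemma count_zero (F : finFieldType) (x y : F) : (x != 0) || (y != 0) ->
  (\sum_(p : F * F) ((p.1 * x + p.2 * y == 0)%R : nat))%N = #|F|.
Proof.
case/orP => [x0|y0]; first exact: count_zero1.
rewrite -(@count_zero1 F y x y0).
rewrite -(pair_big xpredT xpredT (fun a b => ((a * x + b * y == 0)%R : nat))) /=.
rewrite -(pair_big xpredT xpredT (fun a b => ((a * y + b * x == 0)%R : nat))) /=.
rewrite exchange_big; apply: eq_bigr => a _; apply: eq_bigr => b _.
by rewrite addrC.
Qed.

Lemma count_nz (F : finFieldType) (x y : F) : (x != 0) || (y != 0) ->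
  (\sum_(p : F * F) ((p.1 * x + p.2 * y != 0)%R : nat))%N = (#|F| * #|F| - #|F|)%N.
Proof.
move=> h; rewrite -card_prod -(@count_zero F x y h) -sum1_card.
have -> : (\sum_(i : F * F) 1 = \sum_(p : F * F) (((p.1 * x + p.2 * y != 0)%R : nat)
    + ((p.1 * x + p.2 * y == 0)%R : nat)))%N.
  by apply: eq_bigr => p _; rewrite addn_negb.
by rewrite (@big_split nat 0%N addn) /= addnK.
Qed.

Theorem lemma2p6 (F : finFieldType) (n : nat) (C : {vspace 'rV[F]_n}) :
  non_overlapping (1 + (#|F|%:R)^-1) C.
Proof.
have q1 := finNzRing_gt1 F.
set q := #|F| in q1 *.
split.
  by rewrite lerDl invr_ge0 ler0n.
move=> u v uC vC fr.
set d := dmin C; set U := supp u :|: supp v; set m := #|U|.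
pose S := (\sum_(p : F * F) wt (p.1 *: u + p.2 *: v))%N.
have nz : forall p : F * F, p != (0, 0) -> p.1 *: u + p.2 *: v != 0.
  case=> a b /= pne; move: fr; rewrite free_cons span_seq1 seq1_free => /andP [uv v0].
  apply/eqP => h; have [a0|a0] := eqVneq a 0.
    move: h; rewrite a0 scale0r add0r => /eqP; rewrite scaler_eq0.
    case/orP => /eqP hh; last by rewrite hh eqxx in v0.
    by rewrite a0 hh eqxx in pne.
  move: uv; rewrite (_ : u = (- (b / a)) *: v) ?memvZ ?memv_line //.
  apply: (scalerI a0); rewrite scalerA mulrN mulrC divfK //.
  by rewrite scaleNr; apply/eqP; rewrite -subr_eq0 opprK; apply/eqP.
have lo : ((q * q - 1) * d <= S)%N.
  rewrite /S (bigD1 (0, 0)) //= subn1 -card_prod -(cardC1 (0 : F, 0 : F)) -sum_nat_const.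
  rewrite (leq_trans _ (leq_addl _ _)) //; apply: leq_sum => p pne.
  apply: dmin_le; last exact: nz.
  by rewrite memvD // memvZ.
have hi : S = (m * (q * q - q))%N.
  rewrite /S; under eq_bigr => p _ do rewrite wt_sum.
  rewrite exchange_big /= /m -sum1_card big_distrl /= [RHS]big_mkcond /=.
  apply: eq_bigr => i _.
  have -> : (\sum_(p : F * F) (((p.1 *: u + p.2 *: v) 0 i != 0)%R : nat) =
      \sum_(p : F * F) ((p.1 * u 0 i + p.2 * v 0 i != 0)%R : nat))%N.
    by apply: eq_bigr => p _; rewrite !mxE.
  case: ifP => iU.
    by rewrite mul1n count_nz //; move: iU; rewrite !inE.
  rewrite big1 // => p _; move/negbT: iU; rewrite !inE negb_or !negbK.
  by case/andP => /eqP -> /eqP ->; rewrite !mulr0 addr0 eqxx.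
have key : ((q + 1) * d <= m * q)%N.
  move: lo; rewrite hi.
  have -> : (q * q - 1 = (q - 1) * (q + 1))%N.
    rewrite mulnBl mulnDr !muln1 mul1n subnDA addnK //.
  have -> : (q * q - q = (q - 1) * q)%N by rewrite mulnBl mul1n.
  nia.
have qp : (0 : rat) < q%:R by rewrite ltr0n ltnW.
rewrite -(ler_pM2r qp) mulrAC mulrDl mul1r mulVf ?gt_eqF //.
  rewrite -[1]/(1%:R) -natrD -!natrM ler_nat //.
by rewrite pnatr_eq0 -lt0n ltnW.
Qed.
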